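(* For every odd integer $n\ge 5$ there exists a square torus $T^2=\mathbb{R}^2/\{(2\pi\tilde k a,2\pi\tilde l a):\tilde k,\tilde l\in\mathbb{Z}\}$, for some $a>0$, with its flat metric, that admits a (full, isometric) proper-biharmonic immersion into the unit sphere $\mathbb{S}^n$ with constant mean curvature.
   Context: A map $\phi:(M,g)\to(N,\tilde g)$ between Riemannian manifolds is biharmonic if it is a critical point of the bienergy $E_2(\phi)=\frac12\int_M|\tau(\phi)|^2v_g$, equivalently if $\tau_2(\phi)=-\Delta\tau(\phi)-\operatorname{trace}R^N(d\phi,\tau(\phi))d\phi=0$, where $\tau(\phi)$ is the tension field; it is proper-biharmonic if biharmonic but not harmonic. Constant mean curvature (CMC) means $|H|$ is constant, $H$ the mean curvature vector field. Immersions are isometric and full, i.e. their image does not lie in any totally geodesic sphere $\mathbb{S}^{n'}\subset\mathbb{S}^n$ with $n'<n$. *)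

(* Defs.v *)
From Stdlib Require Import Reals List.
From Coquelicot Require Import Coquelicot.
Open Scope R_scope.

(* A map R^2 -> R^(n+1) is encoded componentwise: Phi k x y, k = 0..n.
   Vector fields along the map are encoded the same way. *)
Definition field := nat -> R -> R -> R.

(* Euclidean inner product on R^(n+1) (components 0..n; sum_f_R0 has n+1 terms). *)
Definition dot (n : nat) (u v : nat -> R) : R := sum_f_R0 (fun k => u k * v k) n.

Definition at_pt (V : field) (x y : R) : nat -> R := fun k => V k x y.

(* partial derivative: true = d/dx, false = d/dy *)
Definition pd (b : bool) (f : R -> R -> R) : R -> R -> R :=
  fun x y => if b then Derive (fun t => f t y) x else Derive (fun t => f x t) y.

Fixpoint Dl (l : list bool) (f : R -> R -> R) : R -> R -> R :=
  match l with nil => f | b :: l' => pd b (Dl l' f) end.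

Definition smooth2 (f : R -> R -> R) : Prop :=
  forall (l : list bool) (x y : R),
    ex_derive (fun t => Dl l f t y) x /\ ex_derive (fun t => Dl l f x t) y.

Definition dfield (b : bool) (V : field) : field := fun k => pd b (V k).

(* Levi-Civita connection of the pull-back bundle phi^{-1} T S^n, for phi
   with values in the unit sphere of R^(n+1): tangential projection of the
   ambient derivative. *)
Definition cov (n : nat) (Phi : field) (b : bool) (V : field) : field :=
  fun k x y =>
    pd b (V k) x y - dot n (at_pt (dfield b V) x y) (at_pt Phi x y) * Phi k x y.

(* tension field tau(phi) = trace nabla dphi; in the flat coordinates (x,y)
   of the torus, nabla_{e_i} e_i = 0. *)
Definition tension (n : nat) (Phi : field) : field :=
  fun k x y => cov n Phi true (dfield true Phi) k x y
             + cov n Phi false (dfield false Phi) k x y.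

Definition Rsph (n : nat) (X Y Z : nat -> R) : nat -> R :=
  fun k => dot n Y Z * X k - dot n X Z * Y k.

(* bitension tau_2 = -Delta tau - trace R(dphi, tau) dphi,
   with rough Laplacian Delta = - trace (nabla^2) (flat coordinates). *)
Definition bitension (n : nat) (Phi : field) : field :=
  let tau := tension n Phi in
  fun k x y =>
    cov n Phi true (cov n Phi true tau) k x y
  + cov n Phi false (cov n Phi false tau) k x y
  - (Rsph n (at_pt (dfield true Phi) x y) (at_pt tau x y)
            (at_pt (dfield true Phi) x y) k
     + Rsph n (at_pt (dfield false Phi) x y) (at_pt tau x y)
            (at_pt (dfield false Phi) x y) k).

Definition torus_periodic (n : nat) (a : R) (Phi : field) : Prop :=
  forall k x y, (k <= n)%nat ->
    Phi k (x + 2 * PI * a) y = Phi k x y /\ Phi k x (y + 2 * PI * a) = Phi k x y.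

Definition into_unit_sphere (n : nat) (Phi : field) : Prop :=
  forall x y, dot n (at_pt Phi x y) (at_pt Phi x y) = 1.

Definition isometric (n : nat) (Phi : field) : Prop :=
  forall x y,
    dot n (at_pt (dfield true Phi) x y) (at_pt (dfield true Phi) x y) = 1 /\
    dot n (at_pt (dfield false Phi) x y) (at_pt (dfield false Phi) x y) = 1 /\
    dot n (at_pt (dfield true Phi) x y) (at_pt (dfield false Phi) x y) = 0.

(* full: the image lies in no totally geodesic S^{n'} (n' < n), i.e. in no
   linear hyperplane of R^(n+1) *)
Definition full (n : nat) (Phi : field) : Prop :=
  forall c : nat -> R,
    (forall x y, dot n c (at_pt Phi x y) = 0) -> forall k, (k <= n)%nat -> c k = 0.

Definition biharmonic (n : nat) (Phi : field) : Prop :=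
  forall k x y, (k <= n)%nat -> bitension n Phi k x y = 0.

Definition harmonic (n : nat) (Phi : field) : Prop :=
  forall k x y, (k <= n)%nat -> tension n Phi k x y = 0.

(* mean curvature vector H = tau / m with m = 2; CMC: |H| constant *)
Definition mean_curv_norm (n : nat) (Phi : field) (x y : R) : R :=
  sqrt (dot n (at_pt (tension n Phi) x y) (at_pt (tension n Phi) x y)) / 2.

Definition cmc (n : nat) (Phi : field) : Prop :=
  exists c : R, forall x y, mean_curv_norm n Phi x y = c.

(* Main.v *)
Require Import Defs.
From Stdlib Require Import Reals Arith.
From Coquelicot Require Import Coquelicot.
From Stdlib Require Import Lra Lia Psatz ZArith List FunctionalExtensionality.
Open Scope R_scope.
Import ListNotations.

Definition mode (A al be d : R) : R -> R -> R := fun x y => A * cos (al*x + be*y + d).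

Lemma cos_plus_PI2 v : cos (v + PI/2) = - sin v.
Proof. rewrite cos_plus, cos_PI2, sin_PI2; ring. Qed.
Lemma cos_minus_PI2 v : cos (v - PI/2) = sin v.
Proof. rewrite cos_minus, cos_PI2, sin_PI2; ring. Qed.
Lemma cos_plus_PI v : cos (v + PI) = - cos v.
Proof. rewrite cos_plus, cos_PI, sin_PI; ring. Qed.

Lemma mode_ext A A' al be d d' : A = A' -> d = d' -> mode A al be d = mode A' al be d'.
Proof. intros -> ->; reflexivity. Qed.

Lemma pd_mode_t A al be d : pd true (mode A al be d) = mode (A*al) al be (d + PI/2).
Proof.
  extensionality x; extensionality y; unfold pd, mode; simpl.
  apply is_derive_unique. auto_derive; auto.
  replace (al * x + be * y + (d + PI / 2)) with ((al * x + be * y + d) + PI/2) by ring.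
  rewrite cos_plus_PI2; ring.
Qed.

Lemma pd_mode_f A al be d : pd false (mode A al be d) = mode (A*be) al be (d + PI/2).
Proof.
  extensionality x; extensionality y; unfold pd, mode; simpl.
  apply is_derive_unique. auto_derive; auto.
  replace (al * x + be * y + (d + PI / 2)) with ((al * x + be * y + d) + PI/2) by ring.
  rewrite cos_plus_PI2; ring.
Qed.

Definition gam (b : bool) (al be : R) := if b then al else be.

Lemma pd_mode b A al be d : pd b (mode A al be d) = mode (A * gam b al be) al be (d + PI/2).
Proof. destruct b; [apply pd_mode_t | apply pd_mode_f]. Qed.

Fixpoint psum (N : nat) (g : nat -> R) : R :=
  match N with O => 0 | S N' => psum N' g + g N' end.

Lemma psum_ext N g g' : (forall j, (j < N)%nat -> g j = g' j) -> psum N g = psum N g'.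
Proof. induction N; simpl; intros H; auto. rewrite IHN by (intros; apply H; lia). rewrite H by lia; auto. Qed.

Lemma psum_scal N c g : psum N (fun j => c * g j) = c * psum N g.
Proof. induction N; simpl; [ring|rewrite IHN; ring]. Qed.

Lemma psum_shift N g : psum (S N) g = g 0%nat + psum N (fun j => g (S j)).
Proof. induction N; simpl in *; [ring|]. rewrite IHN; ring. Qed.

Definition lsum {T} (g : T -> R) (l : list T) : R := fold_right (fun m acc => g m + acc) 0 l.

Lemma psum_lsum {T} (l : list T) d g : psum (length l) (fun j => g (nth j l d)) = lsum g l.
Proof.
  induction l; [simpl; auto|].
  change (length (a::l)) with (S (length l)).
  rewrite (psum_shift (length l)). simpl nth. unfold lsum in *. simpl fold_right. rewrite IHl; ring.
Qed.

Lemma sum_pairs L f : sum_f_R0 f (2*L+1) = psum (S L) (fun j => f (2*j)%nat + f (2*j+1)%nat).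
Proof.
  induction L.
  - simpl. ring.
  - replace (2 * S L + 1)%nat with (S (S (2*L+1))) by lia.
    rewrite tech5, tech5, IHL. remember (S L) as L'. simpl psum. subst L'.
    replace (S (2*L+1)) with (2 * S L)%nat by lia.
    replace (S (2 * S L)) with (2 * S L + 1)%nat by lia. rewrite Rplus_assoc; reflexivity.
Qed.

Definition mdata := (R*R*R)%type.
Definition fA (m : mdata) := fst (fst m).
Definition fP (m : mdata) := snd (fst m).
Definition fQ (m : mdata) := snd m.
Definition d0 : mdata := (0,0,0).
Definition md (l : list mdata) (k : nat) := nth (Nat.div2 k) l d0.
Definition De (k : nat) := if Nat.even k then 0 else - (PI/2).
Definition al (a : R) (m : mdata) := fP m / a.
Definition be (a : R) (m : mdata) := fQ m / a.

Definition G (a : R) (l : list mdata) (h : mdata -> R) (s : R) : field :=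
  fun k => mode (h (md l k) * fA (md l k)) (al a (md l k)) (be a (md l k)) (De k + s).

Lemma pdG a l h s b k :
  pd b (G a l h s k) = G a l (fun m => h m * gam b (al a m) (be a m)) (s + PI/2) k.
Proof. unfold G. rewrite pd_mode. apply mode_ext; ring. Qed.

Lemma dfieldG a l h s b :
  dfield b (G a l h s) = G a l (fun m => h m * gam b (al a m) (be a m)) (s + PI/2).
Proof. extensionality k. apply pdG. Qed.

Lemma pair_id A1 A2 v s s' :
  A1 * cos (v + (0 + s)) * (A2 * cos (v + (0 + s'))) +
  A1 * cos (v + (- (PI/2) + s)) * (A2 * cos (v + (- (PI/2) + s'))) =
  cos (s - s') * (A1 * A2).
Proof.
  replace (v + (- (PI/2) + s)) with ((v + s) - PI/2) by ring.
  replace (v + (- (PI/2) + s')) with ((v + s') - PI/2) by ring.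
  rewrite !cos_minus_PI2.
  replace (s - s') with ((v + (0+s)) - (v + (0+s'))) by ring.
  rewrite cos_minus.
  replace (v + s) with (v + (0+s)) by ring.
  replace (v + s') with (v + (0+s')) by ring. ring.
Qed.

Lemma sum_pairs_n n L f : S n = (2 * L)%nat ->
  sum_f_R0 f n = psum L (fun j => f (2*j)%nat + f (2*j+1)%nat).
Proof.
  intros H. destruct L as [|L']; [lia|].
  replace n with (2*L'+1)%nat by lia. apply sum_pairs.
Qed.

Lemma dotG a l n (Hn : S n = (2 * length l)%nat) h h' s s' x y :
  dot n (at_pt (G a l h s) x y) (at_pt (G a l h' s') x y)
  = cos (s - s') * lsum (fun m => h m * h' m * fA m ^ 2) l.
Proof.
  unfold dot. rewrite (sum_pairs_n n (length l)) by exact Hn.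
  rewrite <- (psum_lsum l d0). rewrite <- psum_scal. apply psum_ext.
  intros j _. unfold at_pt, G, mode, md, De.
  rewrite Nat.div2_double, Nat.div2_odd', Nat.even_even, Nat.even_odd.
  rewrite pair_id. ring.
Qed.

Definition Phi a l := G a l (fun _ => 1) 0.

Lemma lsum_eq {T} (g g' : T -> R) l : (forall m, g m = g' m) -> lsum g l = lsum g' l.
Proof. intros H; induction l; simpl; auto. rewrite H, IHl; auto. Qed.

Lemma covG a l n (Hn : S n = (2 * length l)%nat) h s b k x y :
  cov n (Phi a l) b (G a l h s) k x y =
  G a l (fun m => h m * gam b (al a m) (be a m)) (s + PI/2) k x y
  - cos (s + PI/2) * lsum (fun m => h m * gam b (al a m) (be a m) * fA m ^ 2) l * Phi a l k x y.
Proof.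
  unfold cov. rewrite pdG, dfieldG. unfold Phi. rewrite dotG by exact Hn.
  rewrite Rminus_0_r.
  rewrite (lsum_eq (fun m => h m * gam b (al a m) (be a m) * 1 * fA m ^ 2)
                   (fun m => h m * gam b (al a m) (be a m) * fA m ^ 2)) by (intros; ring).
  reflexivity.
Qed.

Lemma G_PI a l h s k x y : G a l h (s + PI/2 + PI/2) k x y = - G a l h s k x y.
Proof.
  unfold G, mode. replace (al a (md l k) * x + be a (md l k) * y + (De k + (s + PI / 2 + PI / 2)))
  with ((al a (md l k) * x + be a (md l k) * y + (De k + s)) + PI) by (field).
  rewrite cos_plus_PI. ring.
Qed.

Lemma tensionG a l n (Hn : S n = (2 * length l)%nat)
  (H2 : lsum (fun m => al a m ^ 2 * fA m ^ 2) l = 1)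
  (H3 : lsum (fun m => be a m ^ 2 * fA m ^ 2) l = 1) :
  tension n (Phi a l) = G a l (fun m => 2 - (al a m ^ 2 + be a m ^ 2)) 0.
Proof.
  extensionality k; extensionality x; extensionality y.
  unfold tension. unfold Phi at 2 4. rewrite !dfieldG. rewrite !covG by exact Hn.
  rewrite !G_PI. cbn [gam].
  replace (0 + PI / 2 + PI / 2) with PI by field. rewrite cos_PI.
  rewrite (lsum_eq _ (fun m => al a m ^ 2 * fA m ^ 2)) by (intros; ring).
  rewrite (lsum_eq (fun m => 1 * be a m * be a m * fA m ^ 2) (fun m => be a m ^ 2 * fA m ^ 2)) by (intros; ring).
  rewrite H2, H3. unfold Phi, G, mode. ring.
Qed.

Lemma lsum_plus {T} (f g : T -> R) l : lsum f l + lsum g l = lsum (fun m => f m + g m) l.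
Proof. induction l; simpl; [ring|]. rewrite <- IHl. ring. Qed.

Lemma covG0 a l n (Hn : S n = (2 * length l)%nat) h b :
  cov n (Phi a l) b (G a l h 0) = G a l (fun m => h m * gam b (al a m) (be a m)) (0 + PI/2).
Proof.
  extensionality k; extensionality x; extensionality y.
  rewrite covG by exact Hn. rewrite Rplus_0_l, cos_PI2. ring.
Qed.

Lemma md_in l k : (Nat.div2 k < length l)%nat -> In (md l k) l.
Proof. intros H. unfold md. apply nth_In. exact H. Qed.

Lemma div2_lt k L : (S k <= 2 * L)%nat -> (Nat.div2 k < L)%nat.
Proof. intros H. pose proof (Nat.div2_odd k). destruct (Nat.odd k); simpl in *; lia. Qed.

Lemma bitensionG a l n (Hn : S n = (2 * length l)%nat) mu
  (H2 : lsum (fun m => al a m ^ 2 * fA m ^ 2) l = 1)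
  (H3 : lsum (fun m => be a m ^ 2 * fA m ^ 2) l = 1)
  (H5 : forall m, In m l -> (2 - (al a m ^ 2 + be a m ^ 2)) ^ 2 = mu)
  (H6 : lsum (fun m => (2 - (al a m ^ 2 + be a m ^ 2)) * (al a m ^ 2 + be a m ^ 2) * fA m ^ 2) l = - mu) :
  biharmonic n (Phi a l).
Proof.
  intros k x y Hk. unfold bitension. cbv zeta. rewrite (tensionG a l n Hn H2 H3).
  rewrite !covG0 by exact Hn. rewrite !covG by exact Hn. rewrite !G_PI.
  unfold Rsph. unfold Phi at 3 4 5 6 7 8 9 10. rewrite !dfieldG. rewrite !dotG by exact Hn.
  cbn [gam].
  replace (0 + PI / 2 + PI / 2) with PI by field. rewrite cos_PI.
  replace (0 - (0 + PI/2)) with (- (PI/2)) by ring. rewrite cos_neg, cos_PI2.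
  replace (0 + PI/2 - (0 + PI/2)) with 0 by ring. rewrite cos_0.
  rewrite (lsum_eq (fun m => 1 * al a m * (1 * al a m) * fA m ^ 2) (fun m => al a m ^ 2 * fA m ^ 2)) by (intros; ring).
  rewrite (lsum_eq (fun m => 1 * be a m * (1 * be a m) * fA m ^ 2) (fun m => be a m ^ 2 * fA m ^ 2)) by (intros; ring).
  rewrite H2, H3.
  set (w := fun m => 2 - (al a m ^ 2 + be a m ^ 2)).
  assert (HS : lsum (fun m => w m * al a m * al a m * fA m ^ 2) l + lsum (fun m => w m * be a m * be a m * fA m ^ 2) l = - mu).
  { rewrite <- H6, lsum_plus. apply lsum_eq. intros; unfold w; ring. }
  assert (Hin : In (md l k) l) by (apply md_in; apply div2_lt; lia).
  specialize (H5 _ Hin).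
  unfold Phi, G, mode, at_pt. unfold w in *. cbv beta.
  match type of HS with ?A + ?B = _ => assert (HB : B = - mu - A) by lra; rewrite HB end.
  rewrite <- H5. ring.
Qed.

Lemma cos_periodZ v z : cos (v + 2 * PI * IZR z) = cos v.
Proof.
  destruct (Z_of_nat_complete_inf (Z.abs z)) as [k Hk]; [lia|].
  destruct (Z.abs_spec z) as [[_ E]|[_ E]]; rewrite E in Hk.
  - rewrite Hk, <- INR_IZR_INZ. rewrite <- (cos_period v k). f_equal. ring.
  - assert (z = - Z.of_nat k)%Z by lia. subst z. rewrite opp_IZR, <- INR_IZR_INZ.
    rewrite <- (cos_period (v + 2 * PI * - INR k) k). f_equal. ring.
Qed.

Lemma sphereG a l n (Hn : S n = (2 * length l)%nat)
  (H1 : lsum (fun m => fA m ^ 2) l = 1) : into_unit_sphere n (Phi a l).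
Proof.
  intros x y. unfold Phi. rewrite dotG by exact Hn. rewrite Rminus_0_r, cos_0.
  rewrite (lsum_eq _ (fun m => fA m ^ 2)) by (intros; ring). rewrite H1; ring.
Qed.

Lemma isometricG a l n (Hn : S n = (2 * length l)%nat)
  (H2 : lsum (fun m => al a m ^ 2 * fA m ^ 2) l = 1)
  (H3 : lsum (fun m => be a m ^ 2 * fA m ^ 2) l = 1)
  (H4 : lsum (fun m => al a m * be a m * fA m ^ 2) l = 0) : isometric n (Phi a l).
Proof.
  intros x y. unfold Phi. rewrite !dfieldG. rewrite !dotG by exact Hn.
  rewrite Rminus_diag, cos_0. cbn [gam].
  rewrite (lsum_eq (fun m => 1 * al a m * (1 * al a m) * fA m ^ 2) (fun m => al a m ^ 2 * fA m ^ 2)) by (intros; ring).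
  rewrite (lsum_eq (fun m => 1 * be a m * (1 * be a m) * fA m ^ 2) (fun m => be a m ^ 2 * fA m ^ 2)) by (intros; ring).
  rewrite (lsum_eq (fun m => 1 * al a m * (1 * be a m) * fA m ^ 2) (fun m => al a m * be a m * fA m ^ 2)) by (intros; ring).
  rewrite H2, H3, H4. repeat split; ring.
Qed.

Lemma nonharmonicG a l n (Hn : S n = (2 * length l)%nat) mu
  (H2 : lsum (fun m => al a m ^ 2 * fA m ^ 2) l = 1)
  (H3 : lsum (fun m => be a m ^ 2 * fA m ^ 2) l = 1)
  (H5 : forall m, In m l -> (2 - (al a m ^ 2 + be a m ^ 2)) ^ 2 = mu)
  (Hmu : mu <> 0) (HA : forall m, In m l -> fA m <> 0) : ~ harmonic n (Phi a l).
Proof.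
  intros Hh. specialize (Hh 0%nat 0 0 ltac:(lia)).
  rewrite (tensionG a l n Hn H2 H3) in Hh. unfold G, mode in Hh. replace (De 0) with 0 in Hh by reflexivity.
  replace (al a (md l 0) * 0 + be a (md l 0) * 0 + (0 + 0)) with 0 in Hh by ring.
  rewrite cos_0, Rmult_1_r in Hh.
  assert (Hin : In (md l 0) l) by (apply md_in; simpl; lia).
  apply Rmult_integral in Hh. destruct Hh as [Hh|Hh].
  - apply Hmu. rewrite <- (H5 _ Hin), Hh. ring.
  - apply (HA _ Hin Hh).
Qed.

Lemma cmcG a l n (Hn : S n = (2 * length l)%nat)
  (H2 : lsum (fun m => al a m ^ 2 * fA m ^ 2) l = 1)
  (H3 : lsum (fun m => be a m ^ 2 * fA m ^ 2) l = 1) : cmc n (Phi a l).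
Proof.
  eexists. intros x y. unfold mean_curv_norm. rewrite (tensionG a l n Hn H2 H3).
  rewrite dotG by exact Hn. reflexivity.
Qed.

Lemma Dl_G a l k (L : list bool) : forall h s, exists h' s', Dl L (G a l h s k) = G a l h' s' k.
Proof.
  induction L as [|b L IH]; intros h s; simpl.
  - exists h, s; auto.
  - destruct (IH h s) as [h' [s' E]]. rewrite E. rewrite pdG. eauto.
Qed.

Lemma smoothG a l k : smooth2 (Phi a l k).
Proof.
  intros L x y. unfold Phi. destruct (Dl_G a l k L (fun _ => 1) 0) as [h' [s' E]].
  rewrite E. unfold G, mode. split; auto_derive; auto.
Qed.

Lemma periodicG a l n (Hn : S n = (2 * length l)%nat) (Ha : a <> 0)
  (HZ : forall m, In m l -> (exists z, fP m = IZR z) /\ (exists z, fQ m = IZR z)) :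
  torus_periodic n a (Phi a l).
Proof.
  intros k x y Hk.
  assert (Hin : In (md l k) l) by (apply md_in; apply div2_lt; lia).
  destruct (HZ _ Hin) as [[z1 E1] [z2 E2]].
  unfold Phi, G, mode, al, be. rewrite E1, E2. split; apply Rmult_eq_compat_l.
  - match goal with |- cos ?A = cos ?B => transitivity (cos (B + 2 * PI * IZR z1)) end;
      [apply (f_equal cos); field; exact Ha | apply cos_periodZ].
  - match goal with |- cos ?A = cos ?B => transitivity (cos (B + 2 * PI * IZR z2)) end;
      [apply (f_equal cos); field; exact Ha | apply cos_periodZ].
Qed.

Definition F1 (N : nat) (A B W : nat -> R) (x : R) :=
  psum N (fun j => A j * cos (W j * x) + B j * sin (W j * x)).

Lemma F1_derive N A B W x :
  is_derive (F1 N A B W) x (F1 N (fun j => B j * W j) (fun j => - (A j * W j)) W x).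
Proof.
  induction N.
  - unfold F1; simpl. apply (is_derive_ext (fun _ => 0)); [reflexivity|]. auto_derive; auto.
  - unfold F1 in *.
    assert (Ht : is_derive (fun x => A N * cos (W N * x) + B N * sin (W N * x)) x
                   (B N * W N * cos (W N * x) + - (A N * W N) * sin (W N * x)))
      by (auto_derive; auto; ring).
    pose proof (is_derive_plus _ _ x _ _ IHN Ht) as Hp. exact Hp.
Qed.

Lemma F1_zero_D N A B W : (forall x, F1 N A B W x = 0) ->
  forall x, F1 N (fun j => B j * W j) (fun j => - (A j * W j)) W x = 0.
Proof.
  intros H x. rewrite <- (is_derive_unique _ _ _ (F1_derive N A B W x)).
  assert (E : F1 N A B W = fun _ => 0) by (extensionality t; apply H).
  rewrite E. apply Derive_const.
Qed.

Lemma F1_lin N A1 B1 A2 B2 W c x :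
  F1 N A1 B1 W x + c * F1 N A2 B2 W x = F1 N (fun j => A1 j + c * A2 j) (fun j => B1 j + c * B2 j) W x.
Proof. unfold F1. induction N; simpl; [ring|]. rewrite <- IHN. ring. Qed.

Lemma F1_zero_coef N A B W x : (forall j, (j < N)%nat -> A j = 0 /\ B j = 0) -> F1 N A B W x = 0.
Proof.
  intros H. unfold F1. induction N; simpl; [ring|].
  rewrite IHN by (intros; apply H; lia). destruct (H N ltac:(lia)) as [-> ->]. ring.
Qed.

Lemma indep1 N : forall A B W,
  (forall j, (j < N)%nat -> W j <> 0) ->
  (forall i j, (i < N)%nat -> (j < N)%nat -> i <> j -> W i ^ 2 <> W j ^ 2) ->
  (forall x, F1 N A B W x = 0) -> forall j, (j < N)%nat -> A j = 0 /\ B j = 0.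
Proof.
  induction N; intros A B W HW HD HF j Hj; [lia|].
  set (w := W N).
  assert (H1 := F1_zero_D _ _ _ _ HF).
  assert (H2 := F1_zero_D _ _ _ _ H1).
  assert (HN : forall x, F1 N (fun j => (w^2 - W j ^2) * A j) (fun j => (w^2 - W j^2) * B j) W x = 0).
  { intros x. rewrite <- (Rplus_0_r 0). rewrite <- (H2 x) at 1. rewrite <- (Rmult_0_r (w^2)), <- (HF x), F1_lin.
    unfold F1. simpl psum. unfold w.
    match goal with |- _ = ?P + ?T => replace T with 0 by ring end. rewrite Rplus_0_r.
    apply psum_ext. intros; ring. }
  assert (Hc : forall i, (i < N)%nat -> A i = 0 /\ B i = 0).
  { intros i Hi. destruct (IHN _ _ W ltac:(intros; apply HW; lia) ltac:(intros; apply HD; lia) HN i Hi) as [Ha Hb].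
    assert (Hne : w ^ 2 - W i ^ 2 <> 0).
    { intros E. apply (HD N i ltac:(lia) ltac:(lia) ltac:(lia)). fold w. lra. }
    split; [apply (Rmult_eq_reg_l _ _ _ (eq_trans Ha (eq_sym (Rmult_0_r _))) Hne)
           |apply (Rmult_eq_reg_l _ _ _ (eq_trans Hb (eq_sym (Rmult_0_r _))) Hne)]. }
  assert (HT : forall x, A N * cos (w * x) + B N * sin (w * x) = 0).
  { intros x. rewrite <- (HF x). unfold F1. simpl psum. fold (F1 N A B W x).
    rewrite F1_zero_coef by exact Hc. unfold w; ring. }
  assert (HAN : A N = 0).
  { specialize (HT 0). rewrite Rmult_0_r, cos_0, sin_0 in HT. lra. }
  assert (HBN : B N = 0).
  { specialize (HT (PI / 2 / w)). replace (w * (PI / 2 / w)) with (PI/2) in HT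
      by (field; apply HW; lia). rewrite cos_PI2, sin_PI2 in HT. lra. }
  destruct (Nat.eq_dec j N) as [->|Hne]; [auto|]. apply Hc; lia.
Qed.

Definition Rel (m m' : mdata) : Prop :=
  ~ (fP m = fP m' /\ fQ m = fQ m') /\ ~ (fP m = - fP m' /\ fQ m = - fQ m').

Lemma FOP_nth {T} (R : T -> T -> Prop) l d : ForallOrdPairs R l ->
  forall i j, (i < j)%nat -> (j < length l)%nat -> R (nth i l d) (nth j l d).
Proof.
  induction 1 as [|a l Hf Hl IH]; intros i j Hij Hj; simpl in Hj; [lia|].
  destruct i as [|i]; destruct j as [|j]; try lia.
  - simpl. rewrite Forall_forall in Hf. apply Hf. apply nth_In. lia.
  - simpl. apply IH; lia.
Qed.

Lemma key_int z q Bd : 0 <= Bd -> Rabs q <= 2 * Bd -> IZR z + q * / (2 * Bd + 1) = 0 ->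
  IZR z = 0 /\ q = 0.
Proof.
  intros HB Hq E.
  assert (Hpos : 0 < 2 * Bd + 1) by lra.
  assert (Ez : IZR z = - q / (2 * Bd + 1)) by (unfold Rdiv; lra).
  assert (Hlt : Rabs (IZR z) < 1).
  { rewrite Ez. unfold Rdiv. rewrite Rabs_mult, Rabs_Ropp, Rabs_inv, (Rabs_right (2*Bd+1)) by lra.
    apply (Rmult_lt_reg_r (2*Bd+1)); [lra|]. rewrite Rmult_assoc, Rinv_l by lra. lra. }
  apply Rabs_def2 in Hlt. destruct Hlt as [H1 H2].
  assert ((-1 < z)%Z) by (apply lt_IZR; replace (IZR (-1)) with (-1) by reflexivity; lra).
  assert ((z < 1)%Z) by (apply lt_IZR; lra).
  assert (z = 0%Z) by lia. subst z. split; [reflexivity|].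
  rewrite Rplus_0_l in E. apply Rmult_integral in E. destruct E as [E|E]; [exact E|].
  exfalso. apply (Rinv_neq_0_compat (2*Bd+1)); lra.
Qed.

Lemma fullG a l n (Hn : S n = (2 * length l)%nat) (Ha : 0 < a) Bd
  (HZ : forall m, In m l -> (exists z, fP m = IZR z) /\ (exists z, fQ m = IZR z))
  (HB : forall m, In m l -> Rabs (fP m) <= Bd /\ Rabs (fQ m) <= Bd)
  (Hnz : forall m, In m l -> ~ (fP m = 0 /\ fQ m = 0))
  (HA : forall m, In m l -> fA m <> 0)
  (Hd : ForallOrdPairs Rel l) : full n (Phi a l).
Proof.
  intros c Hc.
  set (L := length l).
  assert (HL : (0 < L)%nat) by (unfold L; lia).
  assert (Hin : forall j, (j < L)%nat -> In (nth j l d0) l) by (intros; apply nth_In; auto).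
  assert (HB0 : 0 <= Bd).
  { destruct (HB _ (Hin 0%nat HL)) as [H _]. pose proof (Rabs_pos (fP (nth 0 l d0))). lra. }
  set (tau := / (2 * Bd + 1)).
  set (Aj := fun j => c (2*j)%nat * fA (nth j l d0)).
  set (Bj := fun j => c (2*j+1)%nat * fA (nth j l d0)).
  set (W := fun j => al a (nth j l d0) + tau * be a (nth j l d0)).
  assert (HF : forall x, F1 L Aj Bj W x = 0).
  { intros x. rewrite <- (Hc x (tau * x)). unfold dot, at_pt, Phi, G, mode, md.
    rewrite (sum_pairs_n n L) by exact Hn. unfold F1. apply psum_ext. intros j _.
    rewrite Nat.div2_double, Nat.div2_odd'. unfold De. rewrite Nat.even_even, Nat.even_odd.
    unfold Aj, Bj, W.
    set (th := al a (nth j l d0) * x + be a (nth j l d0) * (tau * x)).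
    replace ((al a (nth j l d0) + tau * be a (nth j l d0)) * x) with th by (unfold th; ring).
    replace (th + (- (PI/2) + 0)) with (th - PI/2) by ring. rewrite cos_minus_PI2.
    rewrite !Rplus_0_r. ring. }
  assert (Hkey : forall m m', In m l -> In m' l -> (al a m - al a m') + tau * (be a m - be a m') = 0 ->
                   fP m = fP m' /\ fQ m = fQ m').
  { intros m m' Hm Hm' E.
    destruct (HZ _ Hm) as [[z1 E1] _]. destruct (HZ _ Hm') as [[z2 E2] _].
    destruct (HB _ Hm) as [_ Q1]. destruct (HB _ Hm') as [_ Q2].
    assert (E' : IZR (z1 - z2) + (fQ m - fQ m') * / (2 * Bd + 1) = 0).
    { rewrite minus_IZR, <- E1, <- E2. unfold al, be, tau in E.
      apply (Rmult_eq_reg_l (/ a)); [|apply Rinv_neq_0_compat; lra].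
      rewrite Rmult_0_r, <- E. field. lra. }
    apply key_int in E'; [|exact HB0|].
    - destruct E' as [E3 E4]. rewrite minus_IZR, <- E1, <- E2 in E3. split; lra.
    - eapply Rle_trans; [apply Rabs_triang|]. rewrite Rabs_Ropp. lra. }
  assert (Hkey2 : forall m m', In m l -> In m' l -> (al a m + al a m') + tau * (be a m + be a m') = 0 ->
                   fP m = - fP m' /\ fQ m = - fQ m').
  { intros m m' Hm Hm' E.
    destruct (HZ _ Hm) as [[z1 E1] _]. destruct (HZ _ Hm') as [[z2 E2] _].
    destruct (HB _ Hm) as [_ Q1]. destruct (HB _ Hm') as [_ Q2].
    assert (E' : IZR (z1 + z2) + (fQ m + fQ m') * / (2 * Bd + 1) = 0).
    { rewrite plus_IZR, <- E1, <- E2. unfold al, be, tau in E.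
      apply (Rmult_eq_reg_l (/ a)); [|apply Rinv_neq_0_compat; lra].
      rewrite Rmult_0_r, <- E. field. lra. }
    apply key_int in E'; [|exact HB0|].
    - destruct E' as [E3 E4]. rewrite plus_IZR, <- E1, <- E2 in E3. split; lra.
    - eapply Rle_trans; [apply Rabs_triang|]. lra. }
  assert (HW : forall j, (j < L)%nat -> W j <> 0).
  { intros j Hj E. apply (Hnz _ (Hin j Hj)).
    destruct (HZ _ (Hin j Hj)) as [[z1 E1] _]. destruct (HB _ (Hin j Hj)) as [_ Q1].
    assert (E' : IZR z1 + fQ (nth j l d0) * / (2 * Bd + 1) = 0).
    { rewrite <- E1. unfold W, al, be, tau in E.
      apply (Rmult_eq_reg_l (/ a)); [|apply Rinv_neq_0_compat; lra].
      rewrite Rmult_0_r, <- E. field. lra. }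
    apply key_int in E'; [|exact HB0|lra]. destruct E' as [E3 E4]. rewrite <- E1 in E3. auto. }
  assert (HD : forall i j, (i < L)%nat -> (j < L)%nat -> i <> j -> W i ^ 2 <> W j ^ 2).
  { intros i j Hi Hj Hij E.
    assert (HR : Rel (nth i l d0) (nth j l d0)).
    { destruct (Nat.lt_gt_cases i j) as [[H|H] _]; auto.
      - apply FOP_nth; auto.
      - assert (Rel (nth j l d0) (nth i l d0)) by (apply FOP_nth; auto).
        destruct H0 as [N1 N2]. split; intros [E1 E2]; [apply N1 | apply N2]; split; lra. }
    destruct HR as [N1 N2].
    assert (E2 : (W i - W j) * (W i + W j) = 0)
      by (replace ((W i - W j) * (W i + W j)) with (W i ^ 2 - W j ^ 2) by ring; lra).
    apply Rmult_integral in E2. destruct E2 as [E2|E2].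
    - apply N1. apply Hkey; auto. unfold W in E2. lra.
    - apply N2. apply Hkey2; auto. unfold W in E2. lra. }
  intros k Hk.
  assert (Hj : (Nat.div2 k < L)%nat) by (apply div2_lt; unfold L; lia).
  destruct (indep1 L Aj Bj W HW HD HF _ Hj) as [H1 H2].
  pose proof (Nat.div2_odd k) as Ek. pose proof (HA _ (Hin _ Hj)) as HAn.
  unfold Aj, Bj in *. destruct (Nat.odd k); simpl in Ek; rewrite Ek.
  - replace (2 * Nat.div2 k + 1)%nat with (2 * Nat.div2 k + 1)%nat by lia.
    apply Rmult_integral in H2. destruct H2; [auto|contradiction].
  - rewrite Nat.add_0_r. apply Rmult_integral in H1. destruct H1; [auto|contradiction].
Qed.

Fixpoint prodR (K : nat) : nat :=
  match K with O => 1%nat | S K' => (prodR K' * ((K'+2)*(K'+2)+1))%nat end.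

Lemma prodR_pos K : (0 < prodR K)%nat.
Proof. induction K; simpl; nia. Qed.

Lemma prodR_div K i : (i < K)%nat -> Nat.divide ((i+2)*(i+2)+1) (prodR K).
Proof.
  induction K; intros H; [lia|]. simpl.
  destruct (Nat.eq_dec i K) as [->|Hne].
  - apply Nat.divide_mul_r. apply Nat.divide_refl.
  - apply Nat.divide_mul_l. apply IHK. lia.
Qed.

Definition Rr K := INR (prodR K).
Definition tt (i : nat) : R := INR i + 2.
Definition Xp K i := Rr K * (tt i ^ 2 - 1) / (tt i ^ 2 + 1).
Definition Yp K i := Rr K * (2 * tt i) / (tt i ^ 2 + 1).

Lemma Rr_pos K : 0 < Rr K.
Proof. unfold Rr. apply lt_0_INR. apply prodR_pos. Qed.

Lemma tt_ge i : 2 <= tt i.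
Proof. unfold tt. pose proof (pos_INR i). lra. Qed.

Lemma XY_sq K i : Xp K i ^ 2 + Yp K i ^ 2 = Rr K ^ 2.
Proof. unfold Xp, Yp. pose proof (tt_ge i). field. nra. Qed.

Lemma Xp_pos K i : 0 < Xp K i.
Proof.
  unfold Xp. pose proof (tt_ge i). pose proof (Rr_pos K).
  apply Rdiv_lt_0_compat; [apply Rmult_lt_0_compat|]; nra.
Qed.

Lemma Yp_pos K i : 0 < Yp K i.
Proof.
  unfold Yp. pose proof (tt_ge i). pose proof (Rr_pos K).
  apply Rdiv_lt_0_compat; [apply Rmult_lt_0_compat|]; nra.
Qed.

Lemma Xp_le K i : Xp K i <= Rr K.
Proof. pose proof (XY_sq K i). pose proof (Yp_pos K i). pose proof (Xp_pos K i). pose proof (Rr_pos K). nra. Qed.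

Lemma Yp_le K i : Yp K i <= Rr K.
Proof. pose proof (XY_sq K i). pose proof (Yp_pos K i). pose proof (Xp_pos K i). pose proof (Rr_pos K). nra. Qed.

Lemma Yp_inj K i j : Yp K i = Yp K j -> i = j.
Proof.
  intros E. unfold Yp in E. pose proof (tt_ge i). pose proof (tt_ge j). pose proof (Rr_pos K).
  assert (E1 : 2 * Rr K * ((tt i - tt j) * (tt i * tt j - 1)) = 0).
  { replace (2 * Rr K * ((tt i - tt j) * (tt i * tt j - 1))) with
      (- ((Rr K * (2 * tt i) / (tt i ^ 2 + 1) - Rr K * (2 * tt j) / (tt j ^ 2 + 1)) * ((tt i ^2+1)*(tt j^2+1))))
      by (field; split; nra).
    rewrite E; ring. }
  assert (E2 : (tt i - tt j) * (tt i * tt j - 1) = 0).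
  { apply Rmult_integral in E1. destruct E1 as [E1|E1]; [nra|exact E1]. }
  apply Rmult_integral in E2. destruct E2 as [E2|E2]; [|nra].
  unfold tt in E2. apply INR_eq. lra.
Qed.

Lemma Xp_int K i : (i < K)%nat -> exists z, Xp K i = IZR z.
Proof.
  intros H. destruct (prodR_div K i H) as [q Hq].
  exists (Z.of_nat q * (Z.of_nat (i+2) * Z.of_nat (i+2) - 1))%Z.
  rewrite mult_IZR, minus_IZR, mult_IZR, <- !INR_IZR_INZ.
  unfold Xp, Rr. rewrite Hq, mult_INR, plus_INR, mult_INR, plus_INR. unfold tt. simpl.
  pose proof (pos_INR i). field. nra.
Qed.

Lemma Yp_int K i : (i < K)%nat -> exists z, Yp K i = IZR z.
Proof.
  intros H. destruct (prodR_div K i H) as [q Hq].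
  exists (Z.of_nat q * (2 * Z.of_nat (i+2)))%Z.
  rewrite mult_IZR, mult_IZR, <- !INR_IZR_INZ.
  unfold Yp, Rr. rewrite Hq, mult_INR, plus_INR, mult_INR, plus_INR. unfold tt. simpl.
  pose proof (pos_INR i). field. nra.
Qed.

Definition pt K w i : mdata := (sqrt w, Xp K i, Yp K i).
Definition rt K w i : mdata := (sqrt w, - Yp K i, Xp K i).
Definition pairs K w : list mdata := flat_map (fun i => [pt K w i; rt K w i]) (seq 0 K).
Definition ev (e : bool) : R := if e then 1 else 0.
Definition wq e K := / (2 * (ev e + 2 * INR K)).
Definition ma e K : mdata := (sqrt (1/4 + ev e * wq e K / 8), 2 * Rr K, 0).
Definition mb e K : mdata := (sqrt (1/4 - ev e * wq e K / 8), 0, 2 * Rr K).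
Definition me e K : mdata := (sqrt (wq e K), 0, Rr K).
Definition mlist e K : list mdata :=
  ma e K :: mb e K :: (if e then [me e K] else []) ++ pairs K (wq e K).
Definition aa K := sqrt 5 * Rr K / 2.

Lemma lsum_app {T} g (l1 l2 : list T) : lsum g (l1 ++ l2) = lsum g l1 + lsum g l2.
Proof. induction l1; simpl; [ring|]. unfold lsum in *. simpl. rewrite IHl1. ring. Qed.

Lemma lsum_pairs_gen K w g c (s : list nat) : (forall i, g (pt K w i) + g (rt K w i) = c) ->
  lsum g (flat_map (fun i => [pt K w i; rt K w i]) s) = INR (length s) * c.
Proof.
  intros H. induction s as [|i s IH]; [simpl; ring|].
  cbn [length]. rewrite S_INR. cbn [flat_map app]. unfold lsum in *. cbn [fold_right].
  rewrite IH. rewrite <- (H i). ring.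
Qed.

Lemma lsum_pairs K w g c : (forall i, g (pt K w i) + g (rt K w i) = c) ->
  lsum g (pairs K w) = INR K * c.
Proof. intros H. unfold pairs. rewrite (lsum_pairs_gen K w g c _ H), length_seq. reflexivity. Qed.

Lemma in_pairs K w m : In m (pairs K w) -> exists i, (i < K)%nat /\ (m = pt K w i \/ m = rt K w i).
Proof.
  unfold pairs. intros H. apply in_flat_map in H. destruct H as [i [Hi Hm]].
  apply in_seq in Hi. exists i. split; [lia|]. simpl in Hm. intuition.
Qed.

Lemma in_mlist e K m : In m (mlist e K) ->
  m = ma e K \/ m = mb e K \/ (e = true /\ m = me e K) \/ exists i, (i < K)%nat /\ (m = pt K (wq e K) i \/ m = rt K (wq e K) i).
Proof.
  unfold mlist. simpl. intros [H|[H|H]]; auto. apply in_app_or in H. destruct H as [H|H].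
  - destruct e; simpl in H; [|contradiction]. destruct H as [H|[]]; auto.
  - right; right; right. apply in_pairs; auto.
Qed.

Lemma ev_bounds e : 0 <= ev e <= 1.
Proof. destruct e; simpl; lra. Qed.

Lemma nq_pos e K : (e = true \/ (1 <= K)%nat) -> 0 < ev e + 2 * INR K.
Proof.
  intros [->|H]; simpl; pose proof (pos_INR K); [lra|].
  apply le_INR in H. simpl in H. pose proof (ev_bounds e). lra.
Qed.

Lemma sqrt_sq w : 0 <= w -> sqrt w ^ 2 = w.
Proof. intros H. simpl. rewrite Rmult_1_r. apply sqrt_sqrt; auto. Qed.

Lemma sqrt5_sq : sqrt 5 ^ 2 = 5.
Proof. apply sqrt_sq. lra. Qed.

Lemma aa_pos K : 0 < aa K.
Proof. unfold aa. pose proof (Rr_pos K). pose proof (sqrt_lt_R0 5 ltac:(lra)). nra. Qed.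

Lemma wq_pos e K : (e = true \/ (1 <= K)%nat) -> 0 < wq e K.
Proof. intros H. unfold wq. apply Rinv_0_lt_compat. pose proof (nq_pos e K H). lra. Qed.

Lemma wq_le e K : (e = true \/ (1 <= K)%nat) -> wq e K <= 1/2.
Proof.
  intros H. pose proof (nq_pos e K H). unfold wq.
  destruct H as [->|H]; simpl.
  - pose proof (pos_INR K). apply (Rmult_le_reg_l (2 * (1 + 2 * INR K))); [lra|].
    rewrite Rinv_r by lra. nra.
  - apply le_INR in H. simpl in H. pose proof (ev_bounds e).
    apply (Rmult_le_reg_l (2 * (ev e + 2 * INR K))); [lra|].
    rewrite Rinv_r by lra. nra.
Qed.

Lemma nq_wq e K : (e = true \/ (1 <= K)%nat) -> (ev e + 2 * INR K) * wq e K = 1/2.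
Proof. intros H. pose proof (nq_pos e K H). unfold wq. field. lra. Qed.

Lemma div_aa_sq K x : (x / aa K) ^ 2 = 4 * x ^ 2 / (5 * Rr K ^ 2).
Proof.
  unfold aa. pose proof (Rr_pos K). pose proof (sqrt_lt_R0 5 ltac:(lra)).
  rewrite <- sqrt5_sq at 2. field. lra.
Qed.

Lemma lsum_cons {T} g (x : T) l : lsum g (x :: l) = g x + lsum g l.
Proof. reflexivity. Qed.

Lemma wa_pos e K : (e = true \/ (1 <= K)%nat) -> 0 <= 1/4 + ev e * wq e K / 8.
Proof. intros H. pose proof (wq_pos e K H). pose proof (ev_bounds e). nra. Qed.
Lemma wb_pos e K : (e = true \/ (1 <= K)%nat) -> 0 < 1/4 - ev e * wq e K / 8.
Proof. intros H. pose proof (wq_pos e K H). pose proof (wq_le e K H). pose proof (ev_bounds e). nra. Qed.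

Ltac simp_modes H :=
  unfold al, be, fA, fP, fQ, ma, mb, me, pt, rt; cbn [fst snd];
  rewrite ?div_aa_sq;
  rewrite ?sqrt_sq by (first [apply wa_pos; exact H | left; apply wb_pos; exact H
                             | left; apply wq_pos; exact H | apply Rlt_le; apply wq_pos; exact H
                             | apply Rlt_le; apply wb_pos; exact H]).

Lemma mlist_sum e K g (H : e = true \/ (1 <= K)%nat) c :
  (forall i, g (pt K (wq e K) i) + g (rt K (wq e K) i) = c) ->
  lsum g (mlist e K) = g (ma e K) + g (mb e K) + ev e * g (me e K) + INR K * c.
Proof.
  intros Hc. unfold mlist. rewrite !lsum_cons, lsum_app, (lsum_pairs _ _ _ c Hc).
  destruct e; simpl; ring.
Qed.

Lemma cond1 e K (H : e = true \/ (1 <= K)%nat) : lsum (fun m => fA m ^ 2) (mlist e K) = 1.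
Proof.
  rewrite (mlist_sum e K _ H (2 * wq e K)).
  - simp_modes H. pose proof (nq_wq e K H). lra.
  - intros i. simp_modes H. ring.
Qed.

Lemma cond2 e K (H : e = true \/ (1 <= K)%nat) :
  lsum (fun m => al (aa K) m ^ 2 * fA m ^ 2) (mlist e K) = 1.
Proof.
  pose proof (Rr_pos K).
  rewrite (mlist_sum e K _ H (4 / 5 * wq e K)).
  - simp_modes H. pose proof (nq_wq e K H).
    replace (4 * (2 * Rr K) ^ 2 / (5 * Rr K ^ 2)) with (16/5) by (field; lra).
    replace (4 * 0 ^ 2 / (5 * Rr K ^ 2)) with 0 by (field; lra). lra.
  - intros i. simp_modes H. rewrite <- Rmult_plus_distr_r.
    replace (4 * Xp K i ^ 2 / (5 * Rr K ^ 2) + 4 * (- Yp K i) ^ 2 / (5 * Rr K ^ 2))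
      with (4 * (Xp K i ^ 2 + Yp K i ^ 2) / (5 * Rr K ^ 2)) by (field; lra).
    rewrite XY_sq. field. lra.
Qed.

Lemma lamP K i : 4 * Xp K i ^ 2 / (5 * Rr K ^ 2) + 4 * Yp K i ^ 2 / (5 * Rr K ^ 2) = 4/5.
Proof.
  pose proof (Rr_pos K).
  replace (4 * Xp K i ^ 2 / (5 * Rr K ^ 2) + 4 * Yp K i ^ 2 / (5 * Rr K ^ 2))
    with (4 * (Xp K i ^ 2 + Yp K i ^ 2) / (5 * Rr K ^ 2)) by (field; lra).
  rewrite XY_sq. field. lra.
Qed.
Lemma lamR K i : 4 * (- Yp K i) ^ 2 / (5 * Rr K ^ 2) + 4 * Xp K i ^ 2 / (5 * Rr K ^ 2) = 4/5.
Proof.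
  pose proof (Rr_pos K).
  replace (4 * (- Yp K i) ^ 2 / (5 * Rr K ^ 2) + 4 * Xp K i ^ 2 / (5 * Rr K ^ 2))
    with (4 * (Xp K i ^ 2 + Yp K i ^ 2) / (5 * Rr K ^ 2)) by (field; lra).
  rewrite XY_sq. field. lra.
Qed.
Lemma lamA K : 4 * (2 * Rr K) ^ 2 / (5 * Rr K ^ 2) = 16/5.
Proof. pose proof (Rr_pos K). field. lra. Qed.
Lemma lamE K : 4 * Rr K ^ 2 / (5 * Rr K ^ 2) = 4/5.
Proof. pose proof (Rr_pos K). field. lra. Qed.
Lemma lam0 K : 4 * 0 ^ 2 / (5 * Rr K ^ 2) = 0.
Proof. pose proof (Rr_pos K). field. lra. Qed.

Lemma cond3 e K (H : e = true \/ (1 <= K)%nat) :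
  lsum (fun m => be (aa K) m ^ 2 * fA m ^ 2) (mlist e K) = 1.
Proof.
  rewrite (mlist_sum e K _ H (4 / 5 * wq e K)).
  - simp_modes H. pose proof (nq_wq e K H). rewrite lamA, lam0, lamE. lra.
  - intros i. simp_modes H. rewrite <- Rmult_plus_distr_r, Rplus_comm, lamP. ring.
Qed.

Lemma cond4 e K (H : e = true \/ (1 <= K)%nat) :
  lsum (fun m => al (aa K) m * be (aa K) m * fA m ^ 2) (mlist e K) = 0.
Proof.
  rewrite (mlist_sum e K _ H 0).
  - simp_modes H. unfold Rdiv. ring.
  - intros i. simp_modes H. unfold Rdiv. ring.
Qed.

Lemma cond5 e K (H : e = true \/ (1 <= K)%nat) :
  forall m, In m (mlist e K) -> (2 - (al (aa K) m ^ 2 + be (aa K) m ^ 2)) ^ 2 = 36/25.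
Proof.
  intros m Hm. apply in_mlist in Hm.
  destruct Hm as [->|[->|[[_ ->]|[i [_ [->| ->]]]]]]; simp_modes H;
    rewrite ?lamA, ?lam0, ?lamE, ?lamP, ?lamR; field.
Qed.

Lemma cond6 e K (H : e = true \/ (1 <= K)%nat) :
  lsum (fun m => (2 - (al (aa K) m ^ 2 + be (aa K) m ^ 2)) * (al (aa K) m ^ 2 + be (aa K) m ^ 2) * fA m ^ 2) (mlist e K) = - (36/25).
Proof.
  rewrite (mlist_sum e K _ H (2 * (6/5) * (4/5) * wq e K)).
  - simp_modes H. pose proof (nq_wq e K H). rewrite ?lamA, ?lam0, ?lamE. lra.
  - intros i. simp_modes H. rewrite lamP, lamR. lra.
Qed.

Ltac relt K i j :=
  pose proof (Xp_pos K i); pose proof (Yp_pos K i); pose proof (Xp_pos K j); pose proof (Yp_pos K j);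
  pose proof (Rr_pos K);
  unfold Rel, fP, fQ, ma, mb, me, pt, rt; cbn [fst snd]; split; intros [E1 E2]; try lra.

Lemma Rel_pp K w i j : i <> j -> Rel (pt K w i) (pt K w j).
Proof. intros Hij. relt K i j. apply Hij. apply (Yp_inj K). exact E2. Qed.
Lemma Rel_rr K w i j : i <> j -> Rel (rt K w i) (rt K w j).
Proof. intros Hij. relt K i j. apply Hij. apply (Yp_inj K). lra. Qed.
Lemma Rel_pr K w i j : Rel (pt K w i) (rt K w j).
Proof. relt K i j. Qed.
Lemma Rel_rp K w i j : Rel (rt K w i) (pt K w j).
Proof. relt K i j. Qed.

Lemma in_pairs_gen K w (s : list nat) m : In m (flat_map (fun i => [pt K w i; rt K w i]) s) ->
  exists j, In j s /\ (m = pt K w j \/ m = rt K w j).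
Proof.
  intros H. apply in_flat_map in H. destruct H as [j [Hj Hm]]. exists j. split; auto.
  simpl in Hm. intuition.
Qed.

Lemma FOP_pairs K w (s : list nat) : NoDup s -> ForallOrdPairs Rel (flat_map (fun i => [pt K w i; rt K w i]) s).
Proof.
  induction s as [|i s IH]; intros Hnd; simpl; [constructor|].
  apply NoDup_cons_iff in Hnd. destruct Hnd as [Hni Hnd].
  assert (Hne : forall j, In j s -> i <> j) by (intros j Hj E; subst; contradiction).
  constructor.
  - constructor; [apply Rel_pr|]. apply Forall_forall. intros m Hm.
    destruct (in_pairs_gen K w s m Hm) as [j [Hj [->| ->]]]; [apply Rel_pp; auto|apply Rel_pr].
  - constructor.
    + apply Forall_forall. intros m Hm.
      destruct (in_pairs_gen K w s m Hm) as [j [Hj [->| ->]]]; [apply Rel_rp|apply Rel_rr; auto].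
    + apply IH; auto.
Qed.

Lemma length_pairs_gen K w (s : list nat) : length (flat_map (fun i => [pt K w i; rt K w i]) s) = (2 * length s)%nat.
Proof. induction s; simpl; [auto|]. rewrite IHs. lia. Qed.

Lemma length_mlist e K : length (mlist e K) = (2 + (if e then 1 else 0) + 2 * K)%nat.
Proof.
  unfold mlist, pairs. cbn [length]. rewrite length_app, length_pairs_gen, length_seq.
  destruct e; simpl; lia.
Qed.

Lemma FOP_mlist e K : ForallOrdPairs Rel (mlist e K).
Proof.
  pose proof (Rr_pos K).
  unfold mlist. constructor.
  - constructor; [unfold Rel, ma, mb, fP, fQ; cbn [fst snd]; split; intros [E1 E2]; lra|].
    apply Forall_forall. intros m Hm. apply in_app_or in Hm. destruct Hm as [Hm|Hm].
    + destruct e; simpl in Hm; [|contradiction]. destruct Hm as [<-|[]].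
      unfold Rel, ma, me, fP, fQ; cbn [fst snd]; split; intros [E1 E2]; lra.
    + destruct (in_pairs_gen K _ _ m Hm) as [j [_ [->| ->]]]; relt K j j.
  - constructor.
    + apply Forall_forall. intros m Hm. apply in_app_or in Hm. destruct Hm as [Hm|Hm].
      * destruct e; simpl in Hm; [|contradiction]. destruct Hm as [<-|[]].
        unfold Rel, mb, me, fP, fQ; cbn [fst snd]; split; intros [E1 E2]; lra.
      * destruct (in_pairs_gen K _ _ m Hm) as [j [_ [->| ->]]]; relt K j j.
    + destruct e; simpl.
      * constructor.
        -- apply Forall_forall. intros m Hm.
           destruct (in_pairs_gen K _ _ m Hm) as [j [_ [->| ->]]]; relt K j j.
        -- apply FOP_pairs, seq_NoDup.
      * apply FOP_pairs, seq_NoDup.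
Qed.

Lemma HZ_mlist e K : forall m, In m (mlist e K) -> (exists z, fP m = IZR z) /\ (exists z, fQ m = IZR z).
Proof.
  assert (HR : exists z, Rr K = IZR z) by (exists (Z.of_nat (prodR K)); apply INR_IZR_INZ).
  destruct HR as [r Er].
  intros m Hm. apply in_mlist in Hm.
  destruct Hm as [->|[->|[[_ ->]|[i [Hi [->| ->]]]]]]; unfold fP, fQ, ma, mb, me, pt, rt; cbn [fst snd].
  - split; [exists (2 * r)%Z; rewrite mult_IZR, Er; reflexivity | exists 0%Z; reflexivity].
  - split; [exists 0%Z; reflexivity | exists (2 * r)%Z; rewrite mult_IZR, Er; reflexivity].
  - split; [exists 0%Z; reflexivity | exists r; exact Er].
  - split; [apply Xp_int | apply Yp_int]; auto.
  - destruct (Yp_int K i Hi) as [z Ez]. split; [exists (- z)%Z; rewrite opp_IZR, Ez; reflexivity | apply Xp_int; auto].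
Qed.

Lemma HB_mlist e K : forall m, In m (mlist e K) -> Rabs (fP m) <= 2 * Rr K /\ Rabs (fQ m) <= 2 * Rr K.
Proof.
  pose proof (Rr_pos K).
  intros m Hm. apply in_mlist in Hm.
  destruct Hm as [->|[->|[[_ ->]|[i [Hi [->| ->]]]]]]; unfold fP, fQ, ma, mb, me, pt, rt; cbn [fst snd];
    (try (pose proof (Xp_pos K i); pose proof (Yp_pos K i); pose proof (Xp_le K i); pose proof (Yp_le K i)));
    split; apply Rabs_le; lra.
Qed.

Lemma Hnz_mlist e K : forall m, In m (mlist e K) -> ~ (fP m = 0 /\ fQ m = 0).
Proof.
  pose proof (Rr_pos K).
  intros m Hm. apply in_mlist in Hm.
  destruct Hm as [->|[->|[[_ ->]|[i [Hi [->| ->]]]]]]; unfold fP, fQ, ma, mb, me, pt, rt; cbn [fst snd];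
    (try (pose proof (Xp_pos K i); pose proof (Yp_pos K i))); intros [E1 E2]; lra.
Qed.

Lemma HA_mlist e K (H : e = true \/ (1 <= K)%nat) : forall m, In m (mlist e K) -> fA m <> 0.
Proof.
  pose proof (wq_pos e K H). pose proof (wb_pos e K H). pose proof (wa_pos e K H).
  pose proof (ev_bounds e).
  intros m Hm. apply in_mlist in Hm.
  destruct Hm as [->|[->|[[_ ->]|[i [Hi [->| ->]]]]]]; unfold fA, ma, mb, me, pt, rt; cbn [fst snd];
    apply Rgt_not_eq, sqrt_lt_R0; nra.
Qed.

Lemma construct n e K (H : e = true \/ (1 <= K)%nat) (Hn : S n = (2 * length (mlist e K))%nat) :
  exists a : R, 0 < a /\
  exists Phi : field,
    (forall k, (k <= n)%nat -> smooth2 (Phi k)) /\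
    torus_periodic n a Phi /\
    into_unit_sphere n Phi /\
    isometric n Phi /\
    full n Phi /\
    biharmonic n Phi /\
    ~ harmonic n Phi /\
    cmc n Phi.
Proof.
  exists (aa K). split; [apply aa_pos|].
  exists (Phi (aa K) (mlist e K)).
  pose proof (aa_pos K) as Ha.
  refine (conj _ (conj _ (conj _ (conj _ (conj _ (conj _ (conj _ _))))))).
  - intros k0 _. apply smoothG.
  - apply periodicG; [exact Hn | lra | apply HZ_mlist].
  - apply sphereG; [exact Hn | apply cond1; exact H].
  - apply isometricG; [exact Hn | apply cond2 | apply cond3 | apply cond4]; exact H.
  - apply (fullG _ _ n Hn Ha (2 * Rr K)); [apply HZ_mlist | apply HB_mlist | apply Hnz_mlist
                                          | apply HA_mlist; exact H | apply FOP_mlist].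
  - apply (bitensionG _ _ n Hn (36/25)); [apply cond2 | apply cond3 | apply cond5 | apply cond6]; exact H.
  - apply (nonharmonicG _ _ n Hn (36/25)); [apply cond2 | apply cond3 | apply cond5 | lra | apply HA_mlist]; exact H.
  - apply cmcG; [exact Hn | apply cond2 | apply cond3]; exact H.
Qed.

Theorem theorem3p11 :
  forall n : nat, (5 <= n)%nat -> Nat.Odd n ->
  exists a : R, 0 < a /\
  exists Phi : field,
    (forall k, (k <= n)%nat -> smooth2 (Phi k)) /\
    torus_periodic n a Phi /\
    into_unit_sphere n Phi /\
    isometric n Phi /\
    full n Phi /\
    biharmonic n Phi /\
    ~ harmonic n Phi /\
    cmc n Phi.
Proof.
  intros n H5 [m Hm].
  destruct (Nat.Even_or_Odd m) as [[K' HK]|[K' HK]].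
  - apply (construct n true (K' - 1)); [left; reflexivity|].
    rewrite length_mlist. lia.
  - apply (construct n false K'); [right; lia|].
    rewrite length_mlist. lia.
Qed.
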